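(* Let $G$ be a finite, simple, connected graph with a fixed root $r\in V(G)$. Then every bunch $B$ of any level $n$ satisfies $\max_{p,q\in B} d_G(p,q)\le W(G)+2$.
   Context: The level of $x$ is $\ell(x)=d_G(r,x)$. For $n\ge0$, $R(n)$ is the set of edges $xy$ with $\max\{\ell(x),\ell(y)\}>n$. Blocks of level $n$ are the equivalence classes of the level-$n$ vertices under: $x\sim y$ iff $x=y$ or $x,y$ are joined by a path with all edges in $R(n)$. Bunches of level $n$ are unions of blocks of level $n$ forming the classes of the transitive closure of ''there is an edge of $G$ between the two blocks''. For a root $r'$ and its levels $\ell_{r'}$ and sets $R_{r'}(n)$, write $x\simeq_n y$ if $x,y$ are in the same connected component of $(V(G),R_{r'}(n))$; $W(r')=\max_{n\ge0}\max\{d_G(x,y):\ell_{r'}(x)=\ell_{r'}(y)=n,\ x\simeq_n y\}$, and the cycle width is $W(G)=\max_{r'\in V(G)} W(r')$. *)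

(* Defs.v *)
(* A finite simple graph = symmetric irreflexive rel on a finType. *)
From mathcomp Require Import all_boot.
Set Implicit Arguments. Unset Strict Implicit. Unset Printing Implicit Defensive.

Section Defs.
Variables (T : finType) (e : rel T).

Fixpoint reach_within (k : nat) (x y : T) : bool :=
  if k is k'.+1 then (x == y) || [exists z, e x z && reach_within k' z y]
  else x == y.

(* graph distance d_G(x,y): least k with a walk of length k from x to y
   (all distances are < #|T| in a connected graph) *)
Definition gdist (x y : T) : nat := find (fun k => reach_within k x y) (iota 0 #|T|).

Definition level (r x : T) : nat := gdist r x.

Definition Redge (r : T) (n : nat) : rel T :=
  fun x y => e x y && (n < maxn (level r x) (level r y)).

Definition same_block (r : T) (n : nat) (x y : T) : bool :=
  [&& level r x == n, level r y == n & connect (Redge r n) x y].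

Definition block_adj (r : T) (n : nat) : rel T :=
  fun x y => [exists x', exists y', [&& same_block r n x x', same_block r n y y' & e x' y']].

Definition is_bunch (r : T) (n : nat) (B : {set T}) : Prop :=
  exists x, level r x = n /\
    B = [set y | (level r y == n) && connect (block_adj r n) x y].

(* W(r') = max_n max { d(x,y) : l_{r'}(x) = l_{r'}(y) = n, x ~_n y } ;
   here n is instantiated as l_{r'}(x) *)
Definition width_root (r' : T) : nat :=
  \max_(x : T) \max_(y : T | (level r' y == level r' x)
                               && connect (Redge r' (level r' x)) x y) gdist x y.

Definition cycle_width : nat := \max_(r' : T) width_root r'.

End Defs.

(* Main.v *)
Require Import Defs.
From mathcomp Require Import all_boot.
Set Implicit Arguments. Unset Strict Implicit. Unset Printing Implicit Defensive.

Section Aux.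
Variables (T : finType) (e : rel T).

Lemma rw_S k x y : reach_within e k x y -> reach_within e k.+1 x y.
Proof.
elim: k x => [|k IH] x /=; first by move=> ->.
case/orP=> [->//|/existsP[z /andP[exz hz]]].
by apply/orP; right; apply/existsP; exists z; rewrite exz; exact: IH.
Qed.

Lemma rw_le k m x y : k <= m -> reach_within e k x y -> reach_within e m x y.
Proof.
move=> /subnK <-; elim: (m - k) => [//|d IH] h.
by rewrite addSn; apply: rw_S; apply: IH.
Qed.

Lemma rw_cat a b x y z : reach_within e a x y -> reach_within e b y z ->
  reach_within e (a + b) x z.
Proof.
elim: a x => [|a IH] x.
  by move/eqP=> ->.
move=> H; case/orP: H => [/eqP-> h|/existsP[w /andP[exw hw]] h].
  by apply: rw_le h; rewrite leq_addl.
rewrite addSn /=.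
by apply/orP; right; apply/existsP; exists w; rewrite exw; exact: IH.
Qed.

Lemma rw_edge x y : e x y -> reach_within e 1 x y.
Proof. by move=> h /=; apply/orP; right; apply/existsP; exists y; rewrite h eqxx. Qed.

Lemma rw_last k x y : reach_within e k.+1 x y ->
  x == y \/ exists z, reach_within e k x z /\ e z y.
Proof.
elim: k x y => [|k IH] x y /=.
  case/orP=> [->|/existsP[z /andP[exz /eqP zy]]]; first by left.
  by right; exists x; subst z; rewrite eqxx.
case/orP=> [->|/existsP[z /andP[exz hz]]]; first by left.
case: (IH z y hz) => [/eqP zy|[w [hw ewy]]].
  by right; exists x; subst z; rewrite eqxx.
right; exists w; split=> //; apply/orP; right; apply/existsP; exists z.
by rewrite exz hw.
Qed.

Lemma gdist_min k x y : reach_within e k x y -> gdist e x y <= k.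
Proof.
move=> h; rewrite leqNgt; apply/negP=> lt.
have lN : k < #|T|.
  by apply: (leq_trans lt); rewrite /gdist -{2}(size_iota 0 #|T|) find_size.
have := before_find 0 lt; rewrite nth_iota // add0n h //.
Qed.

Lemma rw_path x p : path e x p -> reach_within e (size p) x (last x p).
Proof.
elim: p x => [|y p IH] x /=; first by rewrite eqxx.
case/andP=> exy hp; apply/orP; right; apply/existsP; exists y.
by rewrite exy IH.
Qed.

Lemma gdist_reach x y : connect e x y -> reach_within e (gdist e x y) x y.
Proof.
move=> /connectP[p hp ->]; case: (shortenP hp) => p' hp' u _.
have hs : size p' < #|T|.
  by move/card_uniqP: u => /= <-; apply: max_card.
have hh : has (fun k => reach_within e k x (last x p')) (iota 0 #|T|).
  by apply/hasP; exists (size p'); [rewrite mem_iota | apply: rw_path].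
have := nth_find 0 hh; rewrite nth_iota ?add0n //.
by rewrite -{2}(size_iota 0 #|T|) -has_find.
Qed.

End Aux.

Theorem mainTheorem13 (T : finType) (e : rel T) (r : T)
  (Hsym : symmetric e) (Hirr : irreflexive e) (Hconn : forall x y : T, connect e x y)
  (n : nat) (B : {set T}) (HB : is_bunch e r n B) :
  forall p q : T, p \in B -> q \in B -> gdist e p q <= cycle_width e + 2.
Proof.
case: HB => x [lx ->] p q.
rewrite !inE => /andP[/eqP lp cp] /andP[/eqP lq cq].
case: n lx lp lq cp cq => [|n] lx lp lq cp cq.
  have h0 : forall z, level e r z = 0 -> z = r.
    move=> z hz; have := gdist_reach (Hconn r z).
    by rewrite /level in hz; rewrite hz /= => /eqP.
  rewrite (h0 p lp) (h0 q lq).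
  by apply: leq_trans (gdist_min (k:=0) _) _; rewrite /=.
have par : forall z, level e r z = n.+1 ->
    exists z', e z' z /\ level e r z' = n.
  move=> z hz; have := gdist_reach (Hconn r z); rewrite -/(level e r z) hz.
  case/rw_last=> [/eqP rz|[w [hw ewz]]].
    by move: hz; rewrite -rz /level; have := gdist_min (k:=0) (x:=r) (y:=r) (e:=e) (eqxx r); rewrite leqn0 => /eqP->.
  exists w; split=> //; apply/eqP; rewrite eqn_leq gdist_min //=.
  rewrite -ltnS -hz; apply: gdist_min.
  rewrite -addn1; apply: rw_cat (gdist_reach (Hconn r w)) _.
  exact: rw_edge.
have RsymE : forall m, symmetric (Redge e r m).
  by move=> m a b; rewrite /Redge Hsym maxnC.
have Rsub : forall a b, connect (Redge e r n.+1) a b -> connect (Redge e r n) a b.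
  apply: connect_sub => a b /andP[eab lt]; apply: connect1.
  by rewrite /Redge eab (ltn_trans (ltnSn n) lt).
have Bsub : forall a b, connect (block_adj e r n.+1) a b -> connect (Redge e r n) a b.
  apply: connect_sub => a b /existsP[a' /existsP[b' /and3P[ha hb eab]]].
  case/and3P: ha => _ la' caa'; case/and3P: hb => _ lb' cbb'.
  apply: (connect_trans (Rsub _ _ caa')).
  apply: (connect_trans (y := b')).
    by apply: connect1; rewrite /Redge eab (eqP la') (eqP lb') maxnn ltnSn.
  by rewrite (sym_connect_sym (RsymE n)); apply: Rsub.
have cpq : connect (Redge e r n) p q.
  apply: (connect_trans (y := x)); last exact: Bsub.
  by rewrite (sym_connect_sym (RsymE n)); apply: Bsub.
case: (par p lp) => p' [ep lp']; case: (par q lq) => q' [eq lq'].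
have cpq' : connect (Redge e r n) p' q'.
  apply: (connect_trans (y := p)).
    by apply: connect1; rewrite /Redge ep lp' lp (maxn_idPr (leqnSn n)) ltnSn.
  apply: (connect_trans cpq); apply: connect1.
  by rewrite /Redge Hsym eq lq lq' (maxn_idPl (leqnSn n)) ltnSn.
have hw : gdist e p' q' <= cycle_width e.
  apply: leq_trans (leq_bigmax_cond (P := xpredT) (F := width_root e) r isT).
  rewrite /width_root.
  apply: leq_trans (leq_bigmax_cond (P := xpredT) (F := fun x0 => \max_(y | (level e r y == level e r x0) && connect (Redge e r (level e r x0)) x0 y) gdist e x0 y) p' isT).
  apply: (leq_bigmax_cond (F := fun y => gdist e p' y)).
  by rewrite lp' lq' eqxx cpq'.
have : reach_within e (1 + gdist e p' q' + 1) p q.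
  apply: (rw_cat (y := q')); last exact: rw_edge.
  apply: (rw_cat (y := p')); first by apply: rw_edge; rewrite Hsym.
  exact: gdist_reach.
move/gdist_min=> h; apply: (leq_trans h).
by rewrite add1n addn1 -addn2 leq_add2r.
Qed.
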